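(* Let $q\in[0,1)$, $t\in(0,1)$, and $\Omega_n=\{\lambda \text{ partition}:\ell(\lambda)\le n\}$, where $\ell(\lambda)$ is the number of nonzero parts. Define $\eta_n(\lambda)=\ell(\lambda)-n$ and $\phi_{n,x}(\lambda)=\prod_{j\ge0}\frac{1+q^{\lambda_{n-j}}t^{j+x}}{1+t^{j+x}}$ for $x\in\mathbb R$, with the convention $q^{\lambda_{-m}}=0$ for $m\ge0$ (and $q^0=1$, including when $q=0$). Then, for every choice of probability measures on the sets $\Omega_n$, the functions $\eta_n,\phi_{n,x}$ satisfy conditions (1)–(4) below (pointwise on $\Omega_n$), and consequently $\{\ell(\lambda)-n\}_{n\ge1}$ and $\{F_n(x)=\mathbb E\prod_{j\ge0}\frac{1+q^{\lambda_{n-j}}t^{j+x}}{1+t^{j+x}}\}_{n\ge1}$ are asymptotically equivalent as $n\to\infty$. Conditions: (1) $0\le\phi_{n,x}\le\phi_{n,y}\le1$ for $x\le y$; (2) for every $\varepsilon>0$ there is $M$ with $\phi_{n,x}<\varepsilon$ whenever $\eta_n-x>M$ (uniformly in $n,x$); (3) for every $\varepsilon>0$ there is $M$ with $\phi_{n,x}>1-\varepsilon$ whenever $\eta_n-x<-M$ (uniformly in $n,x$); (4) there is $c>0$ independent of $n$ with $\phi_{n,x+1}-\phi_{n,x}\ge c$ whenever $x<\eta_n\le x+1$.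
   Context: A sequence $\{\eta_n\}_{n\ge1}$ of real random variables spreads if $\lim_{n\to\infty}\sup_{x\in\mathbb R}\mathrm{Prob}\{x<\eta_n\le x+1\}=0$. A sequence $\{F_n\}_{n\ge1}$ of non-decreasing functions $\mathbb R\to\mathbb R$ spreads if $\lim_{n\to\infty}\sup_{x\in\mathbb R}(F_n(x+1)-F_n(x))=0$. A sequence of real random variables $\{\eta_n\}$ and a sequence of non-decreasing functions $\{F_n\}$ are asymptotically equivalent if (i) $\{\eta_n\}$ spreads if and only if $\{F_n\}$ spreads, and (ii) when both spread, $\lim_{n\to\infty}\sup_{x\in\mathbb R}(\mathrm{Prob}\{\eta_n\le x\}-F_n(x))=0$. *)

(* Defs.v *)
From Stdlib Require Import Reals Lra Lia List Sorted ClassicalEpsilon.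
Open Scope R_scope.

Definition is_partition (lam : list nat) : Prop :=
  Sorted (fun a b => (b <= a)%nat) lam /\ Forall (fun a => (0 < a)%nat) lam.

Definition ell (lam : list nat) : nat := length lam.

Definition in_Omega (n : nat) (lam : list nat) : Prop :=
  is_partition lam /\ (ell lam <= n)%nat.

(* the i-th part lambda_i (i >= 1); equals 0 for i > ell lam *)
Definition part (lam : list nat) (i : nat) : nat := nth (i - 1) lam 0%nat.

(* q^{lambda_{n-j}}, with the convention q^{lambda_{-m}} = 0 for m >= 0,
   i.e. it is 0 when n - j <= 0; Stdlib pow gives q^0 = 1 also for q = 0 *)
Definition qpow (q : R) (n : nat) (lam : list nat) (j : nat) : R :=
  if Nat.ltb j n then q ^ (part lam (n - j)) else 0.

Definition factor (q t : R) (n : nat) (lam : list nat) (x : R) (j : nat) : R :=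
  (1 + qpow q n lam j * Rpower t (INR j + x)) / (1 + Rpower t (INR j + x)).

Fixpoint prod_f_R0 (f : nat -> R) (N : nat) : R :=
  match N with
  | O => f O
  | S N' => prod_f_R0 f N' * f (S N')
  end.

(* limit of a sequence (chosen classically; meaningful when it converges) *)
Definition lim_seq (u : nat -> R) : R :=
  epsilon (inhabits 0) (fun l => Un_cv u l).

(* value of a series sum_{k>=0} u k (meaningful when it converges) *)
Definition series_val (u : nat -> R) : R :=
  epsilon (inhabits 0) (fun l => infinite_sum u l).

Definition phi (q t : R) (n : nat) (lam : list nat) (x : R) : R :=
  lim_seq (prod_f_R0 (factor q t n lam x)).

Definition eta (n : nat) (lam : list nat) : R := INR (ell lam) - INR n.

(* A probability measure on the countable set Omega_n, given as a
   countable family of atoms a k in Omega_n with weights p k >= 0 summing to 1. *)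
Definition is_prob_measure (n : nat) (p : nat -> R) (a : nat -> list nat) : Prop :=
  (forall k, 0 <= p k) /\ (forall k, in_Omega n (a k)) /\ infinite_sum p 1.

Definition prob_eta (n : nat) (p : nat -> R) (a : nat -> list nat) (A : R -> Prop) : R :=
  series_val (fun k => p k * (if excluded_middle_informative (A (eta n (a k))) then 1 else 0)).

Definition Fexp (q t : R) (n : nat) (p : nat -> R) (a : nat -> list nat) (x : R) : R :=
  series_val (fun k => p k * phi q t n (a k) x).

(* lim_{n -> oo} sup_{x in R} g n x = 0, unfolded:
   eventually the sup is within eps of 0 (upper bound eps, some value >= -eps). *)
Definition sup_tends_to_zero (g : nat -> R -> R) : Prop :=
  forall eps, 0 < eps -> exists N, forall n, (N <= n)%nat ->
    (forall x, g n x <= eps) /\ (exists x, - eps <= g n x).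

Definition rv_spreads (p : nat -> nat -> R) (a : nat -> nat -> list nat) : Prop :=
  sup_tends_to_zero
    (fun n x => prob_eta n (p n) (a n) (fun e => x < e <= x + 1)).

Definition fun_spreads (F : nat -> R -> R) : Prop :=
  sup_tends_to_zero (fun n x => F n (x + 1) - F n x).

(* asymptotic equivalence (sequences indexed by n >= 1; index 0 is irrelevant
   for limits) *)
Definition asymp_equiv (p : nat -> nat -> R) (a : nat -> nat -> list nat)
  (F : nat -> R -> R) : Prop :=
  (rv_spreads p a <-> fun_spreads F) /\
  (rv_spreads p a -> fun_spreads F ->
     sup_tends_to_zero (fun n x => prob_eta n (p n) (a n) (fun e => e <= x) - F n x)).

(* Main.v *)
Require Import Defs.
From Stdlib Require Import Reals List.
Open Scope R_scope.
From Stdlib Require Import Lra Lia ClassicalEpsilon Arith.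
Import Defs.

Lemma cv_le (u v : nat -> R) l l' N0 : Un_cv u l -> Un_cv v l' ->
  (forall n, (N0 <= n)%nat -> u n <= v n) -> l <= l'.
Proof.
  intros Hu Hv Huv. destruct (Rle_or_lt l l') as [H|H]; auto.
  exfalso. set (e := (l - l') / 2).
  assert (He : e > 0) by (unfold e; lra).
  destruct (Hu e He) as [N1 H1]. destruct (Hv e He) as [N2 H2].
  set (k := (N0 + N1 + N2)%nat).
  specialize (H1 k ltac:(unfold k; lia)). specialize (H2 k ltac:(unfold k; lia)).
  specialize (Huv k ltac:(unfold k; lia)).
  unfold Rdist in *. apply Rabs_def2 in H1. apply Rabs_def2 in H2. unfold e in *. lra.
Qed.

Lemma cv_const c : Un_cv (fun _ => c) c.
Proof. intros e He. exists 0%nat. intros. unfold Rdist. rewrite Rminus_diag, Rabs_R0. lra. Qed.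

Lemma lim_seq_eq u l : Un_cv u l -> lim_seq u = l.
Proof.
  intros H. unfold lim_seq.
  assert (H' : Un_cv u (epsilon (inhabits 0) (fun l => Un_cv u l))).
  { apply epsilon_spec. exists l; auto. }
  eapply UL_sequence; eauto.
Qed.

Lemma series_val_eq f l : infinite_sum f l -> series_val f = l.
Proof.
  intros H. unfold series_val.
  assert (H' : infinite_sum f (epsilon (inhabits 0) (fun l => infinite_sum f l))).
  { apply epsilon_spec. exists l; auto. }
  eapply uniqueness_sum; eauto.
Qed.

Lemma exp_le x y : x <= y -> exp x <= exp y.
Proof. intros [H|H]. left; apply exp_increasing; auto. subst; lra. Qed.

Lemma prod_nonneg f N : (forall j, 0 <= f j) -> 0 <= prod_f_R0 f N.
Proof. intros H; induction N; simpl; auto. apply Rmult_le_pos; auto. Qed.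

Lemma prod_le1 f N : (forall j, 0 <= f j <= 1) -> prod_f_R0 f N <= 1.
Proof.
  intros H; induction N; simpl. apply H.
  pose proof (prod_nonneg f N (fun j => proj1 (H j))).
  destruct (H (S N)). nra.
Qed.

Lemma prod_mono f g N : (forall j, 0 <= f j <= g j) -> prod_f_R0 f N <= prod_f_R0 g N.
Proof.
  intros H; induction N; simpl. apply H.
  pose proof (prod_nonneg f N (fun j => proj1 (H j))).
  destruct (H (S N)). apply Rmult_le_compat; auto.
Qed.

Lemma prod_exp_lb f u N : (forall j, exp (- u j) <= f j) ->
  exp (- sum_f_R0 u N) <= prod_f_R0 f N.
Proof.
  intros H; induction N; simpl. apply H.
  replace (- (sum_f_R0 u N + u (S N))) with (- sum_f_R0 u N + - u (S N)) by ring.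
  rewrite exp_plus. apply Rmult_le_compat; try (left; apply exp_pos); auto.
Qed.

Lemma prod_diff f g m : (forall j, 0 <= f j <= g j) -> forall N, (m <= N)%nat ->
  prod_f_R0 g N - prod_f_R0 f N >=
  (g m - f m) * prod_f_R0 (fun j => if Nat.eq_dec j m then 1 else g j) N.
Proof.
  intros H N HN. induction N.
  - assert (m = 0%nat) by lia. subst. cbn [prod_f_R0]. destruct (Nat.eq_dec 0 0); [lra|congruence].
  - destruct (Nat.eq_dec (S N) m) as [E|E].
    + subst m. cbn [prod_f_R0]. destruct (Nat.eq_dec (S N) (S N)) as [_|C]; [|congruence].
      assert (Hpm : prod_f_R0 f N <= prod_f_R0 g N) by (apply prod_mono; auto).
      assert (Hq : prod_f_R0 (fun j => if Nat.eq_dec j (S N) then 1 else g j) N = prod_f_R0 g N).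
      { clear IHN HN. assert (forall k, (k <= N)%nat -> prod_f_R0 (fun j => if Nat.eq_dec j (S N) then 1 else g j) k = prod_f_R0 g k).
        { induction k; intros Hk; cbn [prod_f_R0].
          - destruct (Nat.eq_dec 0 (S N)) as [e|e]; [lia|]. reflexivity.
          - rewrite IHk by lia. destruct (Nat.eq_dec (S k) (S N)) as [e|e]; [lia|]. reflexivity. }
        apply H0; lia. }
      rewrite Hq.
      pose proof (prod_nonneg f N (fun j => proj1 (H j))).
      destruct (H (S N)). nra.
    + assert (m <= N)%nat by lia. specialize (IHN H0). cbn [prod_f_R0].
      destruct (Nat.eq_dec (S N) m); [congruence|].
      pose proof (prod_nonneg f N (fun j => proj1 (H j))).
      destruct (H (S N)).
      assert (0 <= g m - f m) by (destruct (H m); lra).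
      assert (0 <= prod_f_R0 (fun j => if Nat.eq_dec j m then 1 else g j) N).
      { apply prod_nonneg. intro j. destruct (Nat.eq_dec j m); [lra|]. destruct (H j); lra. }
      nra.
Qed.

Definition fac (a T : R) := (1 + a * T) / (1 + T).
Definition Tt (t : R) (j : nat) (x : R) := Rpower t (INR j + x).

Lemma fac_bounds a T : 0 <= a <= 1 -> 0 < T -> 0 < fac a T <= 1.
Proof.
  intros Ha HT. unfold fac. split.
  - apply Rdiv_lt_0_compat; nra.
  - apply Rmult_le_reg_r with (1 + T); [lra|].
    unfold Rdiv. rewrite Rmult_assoc, Rinv_l by lra. nra.
Qed.

Lemma fac_exp a T : 0 <= a -> 0 < T -> exp (- T) <= fac a T.
Proof.
  intros Ha HT. unfold fac. rewrite exp_Ropp.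
  pose proof (exp_ineq1_le T). pose proof (exp_pos T).
  apply Rle_trans with (/ (1 + T)).
  - apply Rinv_le_contravar; lra.
  - unfold Rdiv. rewrite <- (Rmult_1_l (/ (1+T))) at 1.
    apply Rmult_le_compat_r; [left; apply Rinv_0_lt_compat; lra| nra].
Qed.

Lemma fac_mono a T T' : 0 <= a <= 1 -> 0 < T' <= T -> fac a T <= fac a T'.
Proof.
  intros Ha HT. unfold fac.
  assert (E : (1 + a * T') / (1 + T') - (1 + a * T) / (1 + T) =
              (1 - a) * (T - T') / ((1 + T') * (1 + T))) by (field; lra).
  assert (0 <= (1 - a) * (T - T') / ((1 + T') * (1 + T))).
  { apply Rmult_le_pos; [nra|]. left; apply Rinv_0_lt_compat; nra. }
  lra.
Qed.

Lemma fac_small a q T : 0 <= a <= q -> q <= 1 -> 1 <= T -> fac a T <= (1 + q) / 2.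
Proof.
  intros Ha Hq HT. unfold fac.
  assert (E : (1 + q) / 2 - (1 + a * T) / (1 + T) =
              ((1 - q) * (T - 1) + 2 * (q - a) * T) / (2 * (1 + T))) by (field; lra).
  assert (0 <= ((1 - q) * (T - 1) + 2 * (q - a) * T) / (2 * (1 + T))).
  { apply Rmult_le_pos; [|left; apply Rinv_0_lt_compat; nra].
    nra. }
  lra.
Qed.

Lemma fac_diff a q t T : 0 <= a <= q -> q < 1 -> 0 < t < 1 -> 1 <= T -> t * T <= 1 ->
  fac a (t * T) - fac a T >= (1 - q) * (1 - t) * t / (2 * (1 + t)).
Proof.
  intros Ha Hq Ht HT HtT. unfold fac.
  set (D := (1 + t * T) * (1 + T)).
  assert (HD : 0 < D) by (unfold D; nra).
  assert (E : (1 + a * (t * T)) / (1 + t * T) - (1 + a * T) / (1 + T) =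
              T * (1 - a) * (1 - t) / D) by (unfold D; field; nra).
  rewrite E. set (c := (1 - q) * (1 - t) * t / (2 * (1 + t))).
  assert (HtD : t * D <= 2 * (1 + t)).
  { unfold D. replace (t * ((1 + t * T) * (1 + T))) with ((1 + t * T) * (t + t * T)) by ring.
    apply Rmult_le_compat; nra. }
  assert (Hc : c * D <= (1 - q) * (1 - t)).
  { unfold c. 
    assert (E2 : (1 - q) * (1 - t) * t / (2 * (1 + t)) * D =
                 (1 - q) * (1 - t) / (2 * (1 + t)) * (t * D)) by (field; lra).
    rewrite E2.
    assert (E3 : (1 - q) * (1 - t) = (1 - q) * (1 - t) / (2 * (1 + t)) * (2 * (1 + t))) by (field; lra).
    rewrite E3 at 2. apply Rmult_le_compat_l; auto.
    apply Rmult_le_pos; [nra|left; apply Rinv_0_lt_compat; lra]. }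
  set (y := T * (1 - a) * (1 - t) / D).
  assert (Ey : T * (1 - a) * (1 - t) = y * D) by (unfold y; field; lra).
  assert (H1 : (1 - q) * (1 - t) <= (1 - a) * (1 - t)) by nra.
  assert (H0 : 0 <= (1 - a) * (1 - t)) by (apply Rmult_le_pos; lra).
  assert (H2 : (1 - a) * (1 - t) <= T * ((1 - a) * (1 - t))) by nra.
  assert (c * D <= y * D) by lra.
  apply Rle_ge. apply Rmult_le_reg_r with D; auto.
Qed.

Lemma ln_neg t : 0 < t < 1 -> ln t < 0.
Proof. intros. rewrite <- ln_1. apply ln_increasing; lra. Qed.

Lemma Rp_anti t z z' : 0 < t < 1 -> z <= z' -> Rpower t z' <= Rpower t z.
Proof. intros Ht H. unfold Rpower. apply exp_le. pose proof (ln_neg t Ht). nra. Qed.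

Lemma Rp_lt t z z' : 0 < t < 1 -> z < z' -> Rpower t z' < Rpower t z.
Proof. intros Ht H. unfold Rpower. apply exp_increasing. pose proof (ln_neg t Ht). nra. Qed.

Lemma Rp_le1 t z : 0 < t < 1 -> 0 <= z -> Rpower t z <= 1.
Proof. intros. rewrite <- (Rpower_O t) by lra. apply Rp_anti; auto. Qed.

Lemma Rp_ge1 t z : 0 < t < 1 -> z <= 0 -> 1 <= Rpower t z.
Proof. intros. rewrite <- (Rpower_O t) by lra. apply Rp_anti; auto. Qed.

Lemma Tt_pos t j x : 0 < Tt t j x.
Proof. unfold Tt, Rpower. apply exp_pos. Qed.

Lemma Rp_plus1 t z : 0 < t -> Rpower t (z + 1) = t * Rpower t z.
Proof. intros. rewrite Rpower_plus, Rpower_1 by auto. ring. Qed.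

Lemma Tt_S t j x : 0 < t -> Tt t (S j) x = t * Tt t j x.
Proof. intros. unfold Tt. rewrite S_INR. replace (INR j + 1 + x) with ((INR j + x) + 1) by ring.
  apply Rp_plus1; auto. Qed.

Lemma geo_sum t m x N : 0 < t < 1 ->
  sum_f_R0 (fun j => if Nat.leb m j then Tt t j x else 0) N <= Tt t m x / (1 - t).
Proof.
  intros Ht.
  set (u := fun j => if Nat.leb m j then Tt t j x else 0).
  assert (Inv : forall N, (1 - t) * sum_f_R0 u N +
          (if Nat.leb m N then Tt t (S N) x else Tt t m x) <= Tt t m x).
  { intros K. induction K.
    - simpl. unfold u. destruct (Nat.leb m 0) eqn:E.
      + apply Nat.leb_le in E. assert (m = 0%nat) by lia. subst.
        rewrite Tt_S by lra. lra.
      + lra.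
    - cbn [sum_f_R0]. unfold u at 2.
      destruct (Nat.leb m K) eqn:E1.
      + apply Nat.leb_le in E1.
        assert (E2 : Nat.leb m (S K) = true) by (apply Nat.leb_le; lia). rewrite E2.
        rewrite (Tt_S t (S K)) by lra. nra.
      + destruct (Nat.leb m (S K)) eqn:E2.
        * apply Nat.leb_le in E2. apply Nat.leb_gt in E1. assert (m = S K) by lia. subst m.
          rewrite (Tt_S t (S K)) by lra. nra.
        * lra. }
  specialize (Inv N).
  assert (0 <= (if Nat.leb m N then Tt t (S N) x else Tt t m x)).
  { destruct (Nat.leb m N); left; apply Tt_pos. }
  apply Rmult_le_reg_l with (1 - t); [lra|].
  replace ((1 - t) * (Tt t m x / (1 - t))) with (Tt t m x) by (field; lra).
  fold u. lra.
Qed.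

Lemma pow_le_1 q k : 0 <= q <= 1 -> 0 <= q ^ k <= 1.
Proof. intros H. induction k; simpl; [lra|]. split; nra. Qed.

Lemma qpow_lt q n lam j : (j < n - ell lam)%nat -> qpow q n lam j = 1.
Proof.
  intros H. unfold qpow. destruct (Nat.ltb j n) eqn:E.
  - unfold part. rewrite nth_overflow. reflexivity. unfold ell in H. lia.
  - apply Nat.ltb_ge in E. lia.
Qed.

Lemma qpow_ge q n lam j : 0 <= q < 1 -> in_Omega n lam -> (n - ell lam <= j)%nat ->
  0 <= qpow q n lam j <= q.
Proof.
  intros Hq [[_ Hpos] Hl] H. unfold qpow. destruct (Nat.ltb j n) eqn:E.
  - apply Nat.ltb_lt in E. unfold part.
    assert (Hin : In (nth (n - j - 1) lam 0%nat) lam) by (apply nth_In; unfold ell in *; lia).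
    rewrite Forall_forall in Hpos. specialize (Hpos _ Hin).
    destruct (nth (n - j - 1) lam 0%nat) as [|v]; [lia|].
    simpl. pose proof (pow_le_1 q v ltac:(lra)). split; nra.
  - lra.
Qed.

Lemma factor_fac q t n lam x j : factor q t n lam x j = fac (qpow q n lam j) (Tt t j x).
Proof. reflexivity. Qed.

Lemma fac_1 T : 0 < T -> fac 1 T = 1.
Proof. intros. unfold fac. field. lra. Qed.

Lemma qpow_01 q n lam j : 0 <= q < 1 -> in_Omega n lam -> 0 <= qpow q n lam j <= 1.
Proof.
  intros Hq HO. destruct (le_lt_dec (n - ell lam) j).
  - pose proof (qpow_ge q n lam j Hq HO l). lra.
  - rewrite qpow_lt by auto. lra.
Qed.

Lemma factor_bounds q t n lam x j : 0 <= q < 1 -> in_Omega n lam ->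
  0 < factor q t n lam x j <= 1.
Proof. intros. rewrite factor_fac. apply fac_bounds. apply qpow_01; auto. apply Tt_pos. Qed.

Lemma phi_cv q t n lam x : 0 <= q < 1 -> in_Omega n lam ->
  Un_cv (prod_f_R0 (factor q t n lam x)) (phi q t n lam x).
Proof.
  intros Hq HO.
  set (P := prod_f_R0 (factor q t n lam x)).
  assert (Hdec : Un_decreasing P).
  { intro N. unfold P. simpl. pose proof (factor_bounds q t n lam x (S N) Hq HO).
    pose proof (prod_nonneg (factor q t n lam x) N (fun j => Rlt_le _ _ (proj1 (factor_bounds q t n lam x j Hq HO)))).
    nra. }
  assert (Hlb : has_lb P).
  { exists 0. intros r [i Hi]. unfold opp_seq in Hi. subst r.
    pose proof (prod_nonneg (factor q t n lam x) i (fun j => Rlt_le _ _ (proj1 (factor_bounds q t n lam x j Hq HO)))).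
    unfold P. lra. }
  destruct (decreasing_cv P Hdec Hlb) as [l Hl].
  unfold phi. replace (lim_seq (prod_f_R0 (factor q t n lam x))) with l. exact Hl. symmetry; apply lim_seq_eq; exact Hl.
Qed.

Lemma phi_le_prod q t n lam x N : 0 <= q < 1 -> in_Omega n lam ->
  phi q t n lam x <= prod_f_R0 (factor q t n lam x) N.
Proof.
  intros Hq HO. apply decreasing_ineq; [|apply phi_cv; auto].
  intro K. simpl. pose proof (factor_bounds q t n lam x (S K) Hq HO).
  pose proof (prod_nonneg (factor q t n lam x) K (fun j => Rlt_le _ _ (proj1 (factor_bounds q t n lam x j Hq HO)))).
  nra.
Qed.

Lemma phi_01 q t n lam x : 0 <= q < 1 -> in_Omega n lam ->
  0 <= phi q t n lam x <= 1.
Proof.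
  intros Hq HO. split.
  - apply (cv_le (fun _ => 0) (prod_f_R0 (factor q t n lam x)) 0 _ 0%nat).
    apply cv_const. apply phi_cv; auto. intros. apply prod_nonneg.
    intro j. apply Rlt_le, factor_bounds; auto.
  - apply Rle_trans with (prod_f_R0 (factor q t n lam x) 0). apply phi_le_prod; auto.
    simpl. apply factor_bounds; auto.
Qed.

Lemma phi_mono q t n lam x y : 0 <= q < 1 -> 0 < t < 1 -> in_Omega n lam -> x <= y ->
  phi q t n lam x <= phi q t n lam y.
Proof.
  intros Hq Ht HO Hxy.
  apply (cv_le _ _ _ _ 0%nat (phi_cv q t n lam x Hq HO) (phi_cv q t n lam y Hq HO)).
  intros N _. apply prod_mono. intro j. split.
  - apply Rlt_le, factor_bounds; auto.
  - rewrite !factor_fac. apply fac_mono. apply qpow_01; auto.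
    split. apply Tt_pos. unfold Tt. apply Rp_anti; auto. lra.
Qed.

Lemma phi_lb q t n lam x : 0 <= q < 1 -> 0 < t < 1 -> in_Omega n lam ->
  exp (- (Tt t (n - ell lam) x / (1 - t))) <= phi q t n lam x.
Proof.
  intros Hq Ht HO. set (m := (n - ell lam)%nat).
  apply (cv_le _ _ _ _ 0%nat (cv_const _) (phi_cv q t n lam x Hq HO)).
  intros N _.
  set (u := fun j => if Nat.leb m j then Tt t j x else 0).
  apply Rle_trans with (exp (- sum_f_R0 u N)).
  - apply exp_le. pose proof (geo_sum t m x N Ht). unfold u. lra.
  - apply prod_exp_lb. intro j. unfold u. rewrite factor_fac.
    destruct (Nat.leb m j) eqn:E.
    + apply fac_exp. apply qpow_01; auto. apply Tt_pos.
    + apply Nat.leb_gt in E. rewrite qpow_lt by (unfold m in E; lia).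
      rewrite fac_1 by apply Tt_pos. rewrite Ropp_0, exp_0. lra.
Qed.

Lemma phi_ub q t n lam x K : 0 <= q < 1 -> 0 < t < 1 -> in_Omega n lam ->
  INR (n - ell lam) + INR K + x <= 0 ->
  phi q t n lam x <= ((1 + q) / 2) ^ (S K).
Proof.
  intros Hq Ht HO HK. set (m := (n - ell lam)%nat). fold m in HK.
  set (r := (1 + q) / 2).
  assert (Hf : forall j, (m <= j)%nat -> (j <= m + K)%nat -> factor q t n lam x j <= r).
  { intros j H1 H2. rewrite factor_fac. apply fac_small; [apply qpow_ge; auto|lra|].
    unfold Tt. apply Rp_ge1; auto. assert (INR j <= INR (m + K)) by (apply le_INR; auto).
    rewrite plus_INR in H. lra. }
  assert (Hk : forall k, (k <= K)%nat -> prod_f_R0 (factor q t n lam x) (m + k) <= r ^ (S k)).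
  { induction k; intros Hk.
    - rewrite Nat.add_0_r. destruct m as [|m'].
      + simpl. rewrite Rmult_1_r. apply Hf; lia.
      + cbn [prod_f_R0]. rewrite pow_1.
        pose proof (prod_le1 (factor q t n lam x) m' (fun j => ltac:(pose proof (factor_bounds q t n lam x j Hq HO); lra))).
        pose proof (prod_nonneg (factor q t n lam x) m' (fun j => ltac:(pose proof (factor_bounds q t n lam x j Hq HO); lra))).
        pose proof (factor_bounds q t n lam x (S m') Hq HO).
        pose proof (Hf (S m') ltac:(lia) ltac:(lia)). nra.
    - rewrite Nat.add_succ_r. cbn [prod_f_R0]. specialize (IHk ltac:(lia)).
      pose proof (prod_nonneg (factor q t n lam x) (m + k) (fun j => ltac:(pose proof (factor_bounds q t n lam x j Hq HO); lra))).
      pose proof (factor_bounds q t n lam x (S (m + k)) Hq HO).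
      pose proof (Hf (S (m + k)) ltac:(lia) ltac:(lia)).
      replace (r ^ S (S k)) with (r ^ S k * r) by (simpl; ring).
      apply Rmult_le_compat; lra. }
  apply Rle_trans with (prod_f_R0 (factor q t n lam x) (m + K)).
  apply phi_le_prod; auto. apply Hk; lia.
Qed.

Definition cdiff q t := (1 - q) * (1 - t) * t / (2 * (1 + t)) * exp (- (1 / (1 - t))).

Lemma phi_diff q t n lam x : 0 <= q < 1 -> 0 < t < 1 -> in_Omega n lam ->
  -1 <= INR (n - ell lam) + x <= 0 ->
  phi q t n lam (x + 1) - phi q t n lam x >= cdiff q t.
Proof.
  intros Hq Ht HO Hy. set (m := (n - ell lam)%nat). fold m in Hy.
  apply Rle_ge.
  pose proof (CV_minus _ _ _ _ (phi_cv q t n lam (x + 1) Hq HO) (phi_cv q t n lam x Hq HO)) as Hcv.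
  apply (cv_le _ _ _ _ m (cv_const _) Hcv).
  intros N HN.
  set (f := factor q t n lam x). set (g := factor q t n lam (x + 1)).
  assert (Hfg : forall j, 0 <= f j <= g j).
  { intro j. split. apply Rlt_le, factor_bounds; auto.
    unfold f, g. rewrite !factor_fac. apply fac_mono. apply qpow_01; auto.
    split. apply Tt_pos. unfold Tt. apply Rp_anti; auto. lra. }
  pose proof (prod_diff f g m Hfg N HN) as HD.
  assert (Hgm : g m - f m >= (1 - q) * (1 - t) * t / (2 * (1 + t))).
  { unfold f, g. rewrite !factor_fac.
    assert (E : Tt t m (x + 1) = t * Tt t m x).
    { unfold Tt. replace (INR m + (x + 1)) with ((INR m + x) + 1) by ring. apply Rp_plus1; lra. }
    rewrite E. apply (fac_diff _ q); try lra.
    - apply qpow_ge; auto.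
    - unfold Tt. apply Rp_ge1; auto; lra.
    - unfold Tt. rewrite <- Rp_plus1 by lra. apply Rp_le1; auto; lra. }
  set (G := prod_f_R0 (fun j => if Nat.eq_dec j m then 1 else g j) N) in *.
  assert (HG : exp (- (1 / (1 - t))) <= G).
  { set (u := fun j => if Nat.leb (S m) j then Tt t j (x + 1) else 0).
    apply Rle_trans with (exp (- sum_f_R0 u N)).
    - apply exp_le. pose proof (geo_sum t (S m) (x + 1) N Ht).
      assert (Tt t (S m) (x + 1) <= 1).
      { unfold Tt. apply Rp_le1; auto. rewrite S_INR. lra. }
      assert (Tt t (S m) (x + 1) / (1 - t) <= 1 / (1 - t)).
      { unfold Rdiv. apply Rmult_le_compat_r; auto. left; apply Rinv_0_lt_compat; lra. }
      unfold u. lra.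
    - apply prod_exp_lb. intro j. unfold u.
      destruct (Nat.eq_dec j m) as [E|E].
      + subst j. assert (Nat.leb (S m) m = false) by (apply Nat.leb_gt; lia).
        rewrite H. rewrite Ropp_0, exp_0. lra.
      + unfold g. rewrite factor_fac. destruct (Nat.leb (S m) j) eqn:E2.
        * apply fac_exp. apply qpow_01; auto. apply Tt_pos.
        * apply Nat.leb_gt in E2. rewrite qpow_lt by (unfold m in *; lia).
          rewrite fac_1 by apply Tt_pos. rewrite Ropp_0, exp_0. lra. }
  unfold cdiff.
  assert (0 <= (1 - q) * (1 - t) * t / (2 * (1 + t))).
  { apply Rmult_le_pos. apply Rmult_le_pos; [|lra]. apply Rmult_le_pos; lra.
    left; apply Rinv_0_lt_compat; lra. }
  pose proof (exp_pos (- (1 / (1 - t)))).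
  assert ((1 - q) * (1 - t) * t / (2 * (1 + t)) * exp (- (1 / (1 - t))) <= (g m - f m) * G).
  { apply Rmult_le_compat; lra. }
  unfold f, g in *. lra.
Qed.

Definition Ex (p : nat -> R) (b : nat -> R) := series_val (fun k => p k * b k).

Definition bnd (b : nat -> R) := exists C, forall k, 0 <= b k <= C.

Lemma series_val_spec f : (exists l, infinite_sum f l) -> infinite_sum f (series_val f).
Proof. intros H. unfold series_val. apply epsilon_spec. exact H. Qed.

Lemma psum_le1 (p : nat -> R) : (forall k, 0 <= p k) -> infinite_sum p 1 ->
  forall N, sum_f_R0 p N <= 1.
Proof.
  intros Hp Hs N. apply growing_ineq; [|exact Hs].
  intro K. simpl. pose proof (Hp (S K)). lra.
Qed.

Lemma Ex_spec p b : (forall k, 0 <= p k) -> infinite_sum p 1 -> bnd b ->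
  infinite_sum (fun k => p k * b k) (Ex p b).
Proof.
  intros Hp Hs [C HC]. apply series_val_spec.
  assert (Hg : Un_growing (sum_f_R0 (fun k => p k * b k))).
  { intro K. simpl. pose proof (Hp (S K)). pose proof (HC (S K)). nra. }
  assert (HC0 : 0 <= C) by (destruct (HC 0%nat); lra).
  assert (Hub : has_ub (sum_f_R0 (fun k => p k * b k))).
  { exists C. intros r [i Hi]. subst r.
    apply Rle_trans with (sum_f_R0 (fun k => p k * C) i).
    - apply sum_Rle. intros j _. pose proof (Hp j). pose proof (HC j). nra.
    - rewrite <- scal_sum. pose proof (psum_le1 p Hp Hs i). nra. }
  destruct (growing_cv _ Hg Hub) as [l Hl]. exists l. exact Hl.
Qed.

Lemma Ex_le p b b' : (forall k, 0 <= p k) -> infinite_sum p 1 -> bnd b -> bnd b' ->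
  (forall k, b k <= b' k) -> Ex p b <= Ex p b'.
Proof.
  intros Hp Hs Hb Hb' H.
  apply (cv_le _ _ _ _ 0%nat (Ex_spec p b Hp Hs Hb) (Ex_spec p b' Hp Hs Hb')).
  intros N _. apply sum_Rle. intros j _. pose proof (Hp j). pose proof (H j). nra.
Qed.

Lemma bnd_plus b b' : bnd b -> bnd b' -> bnd (fun k => b k + b' k).
Proof.
  intros [C HC] [C' HC']. exists (C + C'). intro k. specialize (HC k). specialize (HC' k). lra.
Qed.

Lemma Ex_plus p b b' : (forall k, 0 <= p k) -> infinite_sum p 1 -> bnd b -> bnd b' ->
  Ex p (fun k => b k + b' k) = Ex p b + Ex p b'.
Proof.
  intros Hp Hs Hb Hb'.
  pose proof (Ex_spec p _ Hp Hs (bnd_plus b b' Hb Hb')) as H1.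
  pose proof (CV_plus _ _ _ _ (Ex_spec p b Hp Hs Hb) (Ex_spec p b' Hp Hs Hb')) as H2.
  apply (uniqueness_sum (fun k => p k * (b k + b' k))); auto.
  intros e He. destruct (H2 e He) as [N HN]. exists N. intros n0 Hn0.
  specialize (HN n0 Hn0).
  replace (sum_f_R0 (fun k => p k * (b k + b' k)) n0) with
    (sum_f_R0 (fun k => p k * b k) n0 + sum_f_R0 (fun k => p k * b' k) n0); auto.
  rewrite <- plus_sum. apply sum_eq. intros; ring.
Qed.

Lemma Ex_const p c : (forall k, 0 <= p k) -> infinite_sum p 1 -> 0 <= c ->
  Ex p (fun _ => c) = c.
Proof.
  intros Hp Hs Hc.
  assert (Hb : bnd (fun _ : nat => c)) by (exists c; intros; lra).
  pose proof (Ex_spec p _ Hp Hs Hb) as H1.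
  pose proof (CV_mult _ _ _ _ (cv_const c) Hs) as H2.
  apply (uniqueness_sum (fun k => p k * c)); auto.

  intros e He. destruct (H2 e He) as [N HN]. exists N. intros n0 Hn0.
  specialize (HN n0 Hn0). rewrite Rmult_1_r in HN. rewrite <- scal_sum. exact HN.
Qed.

Lemma Ex_scal p c b : (forall k, 0 <= p k) -> infinite_sum p 1 -> 0 <= c -> bnd b ->
  Ex p (fun k => c * b k) = c * Ex p b.
Proof.
  intros Hp Hs Hc Hb.
  assert (Hb2 : bnd (fun k => c * b k)).
  { destruct Hb as [C HC]. exists (c * C). intro k. specialize (HC k). split; nra. }
  pose proof (Ex_spec p _ Hp Hs Hb2) as H1.
  pose proof (CV_mult _ _ _ _ (cv_const c) (Ex_spec p b Hp Hs Hb)) as H2.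
  apply (uniqueness_sum (fun k => p k * (c * b k))); auto.
  intros e He. destruct (H2 e He) as [N HN]. exists N. intros n0 Hn0.
  specialize (HN n0 Hn0).
  replace (sum_f_R0 (fun k => p k * (c * b k)) n0) with (c * sum_f_R0 (fun k => p k * b k) n0); auto.
  rewrite scal_sum. apply sum_eq. intros; ring.
Qed.

Lemma bnd_finsum (g : nat -> nat -> R) K : (forall i, bnd (g i)) ->
  bnd (fun k => sum_f_R0 (fun i => g i k) K).
Proof.
  intros Hg. induction K.
  - simpl. apply Hg.
  - simpl. apply (bnd_plus (fun k => sum_f_R0 (fun i => g i k) K) (g (S K))); auto.
Qed.

Lemma Ex_finsum p (g : nat -> nat -> R) K : (forall k, 0 <= p k) -> infinite_sum p 1 ->
  (forall i, bnd (g i)) ->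
  Ex p (fun k => sum_f_R0 (fun i => g i k) K) = sum_f_R0 (fun i => Ex p (g i)) K.
Proof.
  intros Hp Hs Hg. induction K.
  - reflexivity.
  - simpl. rewrite <- IHK.
    apply (Ex_plus p (fun k => sum_f_R0 (fun i => g i k) K) (g (S K))); auto.
    apply bnd_finsum; auto.
Qed.

Lemma Ex_nonneg p b : (forall k, 0 <= p k) -> infinite_sum p 1 -> bnd b -> 0 <= Ex p b.
Proof.
  intros Hp Hs Hb. rewrite <- (Ex_const p 0 Hp Hs) by lra.
  apply Ex_le; auto. exists 0; intros; lra. intro k. destruct Hb as [C HC]. apply HC.
Qed.

Lemma cover K v : -1 < v <= INR K -> exists i, (i <= K)%nat /\ INR i - 1 < v <= INR i.
Proof.
  induction K; intros H.
  - exists 0%nat. simpl in *. split; [lia|lra].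
  - destruct (Rle_or_lt v (INR K)).
    + destruct (IHK ltac:(lra)) as [i [Hi1 Hi2]]. exists i. split; [lia|auto].
    + exists (S K). split; [lia|]. rewrite S_INR in *. lra.
Qed.

Lemma sum_ge_term g K i : (forall j, 0 <= g j) -> (i <= K)%nat -> g i <= sum_f_R0 g K.
Proof.
  intros Hg Hi. induction K.
  - assert (i = 0%nat) by lia. subst. simpl. lra.
  - simpl. destruct (Nat.eq_dec i (S K)).
    + subst. pose proof (cond_pos_sum g K Hg). lra.
    + pose proof (Hg (S K)). assert (i <= K)%nat by lia. specialize (IHK H0). lra.
Qed.

Definition ind (n : nat) (an : nat -> list nat) (A : R -> Prop) (k : nat) : R :=
  if excluded_middle_informative (A (eta n (an k))) then 1 else 0.

Lemma bnd_ind n an A : bnd (ind n an A).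
Proof. exists 1. intro k. unfold ind. destruct excluded_middle_informative; lra. Qed.

Lemma prob_Ex n pn an A : prob_eta n pn an A = Ex pn (ind n an A).
Proof. reflexivity. Qed.

Lemma F_Ex q t n pn an x : Fexp q t n pn an x = Ex pn (fun k => phi q t n (an k) x).
Proof. reflexivity. Qed.

Lemma bnd_phi q t n an x : 0 <= q < 1 -> (forall k, in_Omega n (an k)) ->
  bnd (fun k => phi q t n (an k) x).
Proof. intros Hq HO. exists 1. intro k. apply phi_01; auto. Qed.

Lemma eta_eq n lam : in_Omega n lam -> eta n lam = - INR (n - ell lam).
Proof. intros [_ H]. unfold eta. rewrite minus_INR by auto. ring. Qed.

Lemma F_mono q t n pn an x y : 0 <= q < 1 -> 0 < t < 1 -> is_prob_measure n pn an -> x <= y ->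
  Fexp q t n pn an x <= Fexp q t n pn an y.
Proof.
  intros Hq Ht [Hp [HO Hs]] Hxy. rewrite !F_Ex.
  apply Ex_le; auto; try apply bnd_phi; auto.
  intro k. apply phi_mono; auto.
Qed.

Lemma lowdiff q t n pn an x : 0 <= q < 1 -> 0 < t < 1 -> is_prob_measure n pn an ->
  Fexp q t n pn an (x + 1) - Fexp q t n pn an x >=
  cdiff q t * prob_eta n pn an (fun e => x < e <= x + 1).
Proof.
  intros Hq Ht [Hp [HO Hs]]. rewrite !F_Ex, prob_Ex.
  assert (Hc : 0 < cdiff q t).
  { unfold cdiff. apply Rmult_lt_0_compat; [|apply exp_pos].
    apply Rmult_lt_0_compat. apply Rmult_lt_0_compat; [|lra]. apply Rmult_lt_0_compat; lra.
    apply Rinv_0_lt_compat; lra. }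
  rewrite <- (Ex_scal pn (cdiff q t) (ind n an (fun e => x < e <= x + 1))); auto; [|lra|apply bnd_ind].
  assert (Hb2 : bnd (fun k => cdiff q t * ind n an (fun e => x < e <= x + 1) k)).
  { destruct (bnd_ind n an (fun e => x < e <= x + 1)) as [C HC]. exists (cdiff q t * C).
    intro k. specialize (HC k). split; nra. }
  pose proof (Ex_plus pn (fun k => phi q t n (an k) x) _ Hp Hs (bnd_phi q t n an x Hq HO) Hb2) as EP.
  simpl in EP.
  apply Rle_ge. cut (Ex pn (fun k => phi q t n (an k) x + cdiff q t * ind n an (fun e => x < e <= x + 1) k)
      <= Ex pn (fun k => phi q t n (an k) (x + 1))). lra.
  apply Ex_le; auto; try apply bnd_phi; auto.
  - apply bnd_plus. apply bnd_phi; auto.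
    destruct (bnd_ind n an (fun e => x < e <= x + 1)) as [C HC]. exists (cdiff q t * C).
    intro k. specialize (HC k). split; nra.
  - intro k. unfold ind. destruct excluded_middle_informative as [Hin|Hn].
    + rewrite eta_eq in Hin by auto.
      pose proof (phi_diff q t n (an k) x Hq Ht (HO k) ltac:(lra)). lra.
    + rewrite Rmult_0_r, Rplus_0_r. apply phi_mono; auto; lra.
Qed.

Definition Iv (y : R) := fun e => y < e <= y + 1.

Lemma upper_gen q t n pn an (b : nat -> R) x eps1 M K : 0 <= q < 1 -> is_prob_measure n pn an ->
  bnd b -> 0 <= eps1 ->
  (forall k, b k <= phi q t n (an k) x + eps1 +
     sum_f_R0 (fun i => ind n an (Iv (x - M - 1 + INR i)) k) K) ->
  Ex pn b <= Fexp q t n pn an x + eps1 +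
     sum_f_R0 (fun i => prob_eta n pn an (Iv (x - M - 1 + INR i))) K.
Proof.
  intros Hq [Hp [HO Hs]] Hb He H.
  assert (Hb1 : bnd (fun k => phi q t n (an k) x + eps1)).
  { apply bnd_plus. apply bnd_phi; auto. exists eps1; intros; lra. }
  assert (Hb2 : bnd (fun k => sum_f_R0 (fun i => ind n an (Iv (x - M - 1 + INR i)) k) K)).
  { apply (bnd_finsum (fun i => ind n an (Iv (x - M - 1 + INR i)))). intro; apply bnd_ind. }
  apply Rle_trans with (Ex pn (fun k => (phi q t n (an k) x + eps1) +
     sum_f_R0 (fun i => ind n an (Iv (x - M - 1 + INR i)) k) K)).
  - apply Ex_le; auto. apply bnd_plus; auto.
  - rewrite (Ex_plus pn _ _ Hp Hs Hb1 Hb2).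
    rewrite (Ex_plus pn _ _ Hp Hs (bnd_phi q t n an x Hq HO)) by (exists eps1; intros; lra).
    rewrite Ex_const by auto.
    rewrite (Ex_finsum pn (fun i => ind n an (Iv (x - M - 1 + INR i)))) by (auto; intro; apply bnd_ind).
    rewrite F_Ex. apply Req_le. reflexivity.
Qed.

Lemma cover_sum n an x M K k : 0 <= M -> 2 * M + 1 <= INR K ->
  - M <= eta n (an k) - x <= M + 1 ->
  1 <= sum_f_R0 (fun i => ind n an (Iv (x - M - 1 + INR i)) k) K.
Proof.
  intros HM HK H.
  destruct (cover K (eta n (an k) - x + M) ltac:(lra)) as [i [Hi Hv]].
  apply Rle_trans with (ind n an (Iv (x - M - 1 + INR i)) k).
  - unfold ind, Iv. destruct excluded_middle_informative as [_|C]; [lra|].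
    exfalso; apply C; lra.
  - apply (sum_ge_term (fun i => ind n an (Iv (x - M - 1 + INR i)) k) K i); auto.
    intro j. unfold ind. destruct excluded_middle_informative; lra.
Qed.

Lemma sum_nonneg_ind n an x M K k : 0 <= sum_f_R0 (fun i => ind n an (Iv (x - M - 1 + INR i)) k) K.
Proof. apply cond_pos_sum. intro j. unfold ind. destruct excluded_middle_informative; lra. Qed.

Theorem proposition5p6 (q t : R) (hq0 : 0 <= q) (hq1 : q < 1)
  (ht0 : 0 < t) (ht1 : t < 1) :
  (* (1) *)
  (forall n lam x y, (1 <= n)%nat -> in_Omega n lam -> x <= y ->
     0 <= phi q t n lam x /\ phi q t n lam x <= phi q t n lam y /\ phi q t n lam y <= 1) /\
  (* (2) *)
  (forall eps, 0 < eps -> exists M, forall n lam x, (1 <= n)%nat -> in_Omega n lam ->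
     eta n lam - x > M -> phi q t n lam x < eps) /\
  (* (3) *)
  (forall eps, 0 < eps -> exists M, forall n lam x, (1 <= n)%nat -> in_Omega n lam ->
     eta n lam - x < - M -> phi q t n lam x > 1 - eps) /\
  (* (4) *)
  (exists c, 0 < c /\ forall n lam x, (1 <= n)%nat -> in_Omega n lam ->
     x < eta n lam <= x + 1 -> phi q t n lam (x + 1) - phi q t n lam x >= c) /\
  (* consequence: for every choice of probability measures on the Omega_n *)
  (forall (p : nat -> nat -> R) (a : nat -> nat -> list nat),
     (forall n, (1 <= n)%nat -> is_prob_measure n (p n) (a n)) ->
     (forall n x y, (1 <= n)%nat -> x <= y ->
        Fexp q t n (p n) (a n) x <= Fexp q t n (p n) (a n) y) /\
     asymp_equiv p a (fun n x => Fexp q t n (p n) (a n) x)).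
Proof.
  assert (Hq : 0 <= q < 1) by lra. assert (Ht : 0 < t < 1) by lra.
  assert (C1 : forall n lam x y, (1 <= n)%nat -> in_Omega n lam -> x <= y ->
     0 <= phi q t n lam x /\ phi q t n lam x <= phi q t n lam y /\ phi q t n lam y <= 1).
  { intros n lam x y _ HO Hxy. split; [apply phi_01; auto|split; [apply phi_mono; auto|apply phi_01; auto]]. }
  assert (C2 : forall eps, 0 < eps -> exists M, forall n lam x, (1 <= n)%nat -> in_Omega n lam ->
     eta n lam - x > M -> phi q t n lam x < eps).
  { intros eps He.
    destruct (pow_lt_1_zero ((1 + q) / 2) ltac:(rewrite Rabs_right; lra) eps He) as [K0 HK0].
    exists (INR K0). intros n lam x _ HO Hgt. rewrite eta_eq in Hgt by auto.
    apply Rle_lt_trans with (((1 + q) / 2) ^ (S K0)).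
    - apply phi_ub; auto; lra.
    - specialize (HK0 (S K0) ltac:(lia)). rewrite Rabs_right in HK0; auto.
      apply Rle_ge, pow_le; lra. }
  assert (C3 : forall eps, 0 < eps -> exists M, forall n lam x, (1 <= n)%nat -> in_Omega n lam ->
     eta n lam - x < - M -> phi q t n lam x > 1 - eps).
  { intros eps He. exists (ln (eps * (1 - t)) / ln t).
    intros n lam x _ HO Hlt. rewrite eta_eq in Hlt by auto.
    pose proof (phi_lb q t n lam x Hq Ht HO) as Hlb.
    set (T := Tt t (n - ell lam) x) in *.
    pose proof (ln_neg t Ht) as HL.
    assert (HT : T < eps * (1 - t)).
    { unfold T, Tt, Rpower. rewrite <- (exp_ln (eps * (1 - t))) by nra. apply exp_increasing.
      set (A := ln (eps * (1 - t)) / ln t) in *.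
      assert (E : A * ln t = ln (eps * (1 - t))) by (unfold A; field; lra).
      rewrite <- E. nra. }
    pose proof (exp_ineq1_le (- (T / (1 - t)))).
    assert (T / (1 - t) < eps).
    { apply Rmult_lt_reg_r with (1 - t); [lra|]. unfold Rdiv.
      rewrite Rmult_assoc, Rinv_l by lra. lra. }
    lra. }
  assert (Hc : 0 < cdiff q t).
  { unfold cdiff. apply Rmult_lt_0_compat; [|apply exp_pos].
    apply Rmult_lt_0_compat. apply Rmult_lt_0_compat; [|lra]. apply Rmult_lt_0_compat; lra.
    apply Rinv_0_lt_compat; lra. }
  assert (C4 : exists c, 0 < c /\ forall n lam x, (1 <= n)%nat -> in_Omega n lam ->
     x < eta n lam <= x + 1 -> phi q t n lam (x + 1) - phi q t n lam x >= c).
  { exists (cdiff q t). split; auto. intros n lam x _ HO H. rewrite eta_eq in H by auto.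
    apply phi_diff; auto; lra. }
  split; [exact C1|]. split; [exact C2|]. split; [exact C3|]. split; [exact C4|].
  intros p a Hpm. split.
  { intros n x y Hn Hxy. apply F_mono; auto. }
  assert (Key : forall eps, 0 < eps -> exists M K, 0 <= M /\ 2 * M + 1 <= INR K /\
    (forall n lam x, (1 <= n)%nat -> in_Omega n lam -> eta n lam - x > M -> phi q t n lam x < eps) /\
    (forall n lam x, (1 <= n)%nat -> in_Omega n lam -> eta n lam - x < - M -> phi q t n lam x > 1 - eps)).
  { intros eps He. destruct (C2 eps He) as [M2 H2]. destruct (C3 eps He) as [M3 H3].
    set (M := Rmax 0 (Rmax M2 M3)).
    assert (HM0 : 0 <= M) by apply Rmax_l.
    assert (HM2 : M2 <= M) by (eapply Rle_trans; [apply Rmax_l|apply Rmax_r]).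
    assert (HM3 : M3 <= M) by (eapply Rle_trans; [apply Rmax_r|apply Rmax_r]).
    destruct (INR_archimed 1 (2 * M + 1) ltac:(lra)) as [K HK].
    exists M, K. split; auto. split; [lra|]. split.
    - intros. apply H2; auto. lra.
    - intros. apply H3; auto. lra. }
  assert (SumB : forall n eps' x M K, (forall y, prob_eta n (p n) (a n) (fun e => y < e <= y + 1) <= eps') ->
     sum_f_R0 (fun i => prob_eta n (p n) (a n) (Iv (x - M - 1 + INR i))) K <= eps' * INR (S K)).
  { intros. rewrite <- sum_cte. apply sum_Rle. intros. apply H. }
  assert (HSK : forall K, 0 < INR (S K)) by (intro; apply lt_0_INR; lia).
  unfold asymp_equiv, rv_spreads, fun_spreads. split; [split|].
  -
    intros Hrv eps He.
    destruct (Key (eps / 2) ltac:(lra)) as [M [K [HM0 [HK [H2 H3]]]]].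
    set (eps' := eps / (2 * INR (S K))).
    assert (He' : 0 < eps') by (unfold eps'; apply Rdiv_lt_0_compat; [lra|specialize (HSK K); lra]).
    destruct (Hrv eps' He') as [N HN]. exists (max N 1). intros n Hn.
    assert (Hn1 : (1 <= n)%nat) by lia.
    pose proof (Hpm n Hn1) as Hpn. destruct Hpn as [Hp [HO Hs]].
    split.
    + intro x.
      assert (U := upper_gen q t n (p n) (a n) (fun k => phi q t n (a n k) (x + 1)) x (eps / 2) M K
                     Hq (Hpm n Hn1) (bnd_phi q t n (a n) (x + 1) Hq HO) ltac:(lra)).
      assert (S1 := SumB n eps' x M K (fun y => proj1 (HN n ltac:(lia)) y)).
      assert (E' : eps' * INR (S K) = eps / 2) by (unfold eps'; field; specialize (HSK K); lra).
      cut (Ex (p n) (fun k => phi q t n (a n k) (x + 1)) <= Fexp q t n (p n) (a n) x + eps / 2 +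
           sum_f_R0 (fun i => prob_eta n (p n) (a n) (Iv (x - M - 1 + INR i))) K).
      { rewrite <- F_Ex. lra. }
      apply U. intro k.
      pose proof (phi_01 q t n (a n k) x Hq (HO k)).
      pose proof (phi_01 q t n (a n k) (x + 1) Hq (HO k)).
      pose proof (sum_nonneg_ind n (a n) x M K k).
      destruct (Rlt_or_le M (eta n (a n k) - (x + 1))) as [Ha|Ha].
      { pose proof (H2 n (a n k) (x + 1) Hn1 (HO k) Ha). lra. }
      destruct (Rlt_or_le (eta n (a n k) - x) (- M)) as [Hb|Hb].
      { pose proof (H3 n (a n k) x Hn1 (HO k) Hb). lra. }
      pose proof (cover_sum n (a n) x M K k HM0 HK ltac:(lra)). lra.
    + exists 0. pose proof (F_mono q t n (p n) (a n) 0 (0 + 1) Hq Ht (Hpm n Hn1) ltac:(lra)). lra.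
  -
    intros Hf eps He.
    destruct (Hf (cdiff q t * eps) ltac:(nra)) as [N HN]. exists (max N 1). intros n Hn.
    assert (Hn1 : (1 <= n)%nat) by lia.
    pose proof (Hpm n Hn1) as Hpn. destruct Hpn as [Hp [HO Hs]].
    split.
    + intro x. pose proof (lowdiff q t n (p n) (a n) x Hq Ht (Hpm n Hn1)).
      pose proof (proj1 (HN n ltac:(lia)) x). simpl in *.
      apply Rmult_le_reg_l with (cdiff q t); auto. lra.
    + exists 0. rewrite prob_Ex. pose proof (Ex_nonneg (p n) _ Hp Hs (bnd_ind n (a n) (fun e => 0 < e <= 0 + 1))). lra.
  -
    intros Hrv _ eps He.
    destruct (Key (eps / 2) ltac:(lra)) as [M [K [HM0 [HK [H2 H3]]]]].
    destruct (C2 eps He) as [M2 HM2].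
    set (eps' := eps / (2 * INR (S K))).
    assert (He' : 0 < eps') by (unfold eps'; apply Rdiv_lt_0_compat; [lra|specialize (HSK K); lra]).
    destruct (Hrv eps' He') as [N HN]. exists (max N 1). intros n Hn.
    assert (Hn1 : (1 <= n)%nat) by lia.
    pose proof (Hpm n Hn1) as Hpn. destruct Hpn as [Hp [HO Hs]].
    split.
    + intro x.
      assert (U := upper_gen q t n (p n) (a n) (ind n (a n) (fun e => e <= x)) x (eps / 2) M K
                     Hq (Hpm n Hn1) (bnd_ind _ _ _) ltac:(lra)).
      assert (S1 := SumB n eps' x M K (fun y => proj1 (HN n ltac:(lia)) y)).
      assert (E' : eps' * INR (S K) = eps / 2) by (unfold eps'; field; specialize (HSK K); lra).
      cut (Ex (p n) (ind n (a n) (fun e => e <= x)) <= Fexp q t n (p n) (a n) x + eps / 2 +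
           sum_f_R0 (fun i => prob_eta n (p n) (a n) (Iv (x - M - 1 + INR i))) K).
      { rewrite <- prob_Ex. simpl. lra. }
      apply U. intro k.
      pose proof (phi_01 q t n (a n k) x Hq (HO k)).
      pose proof (sum_nonneg_ind n (a n) x M K k).
      unfold ind at 1. destruct excluded_middle_informative as [Hle|Hgt]; [|lra].
      destruct (Rlt_or_le (eta n (a n k) - x) (- M)) as [Hb|Hb].
      { pose proof (H3 n (a n k) x Hn1 (HO k) Hb). lra. }
      pose proof (cover_sum n (a n) x M K k HM0 HK ltac:(lra)). lra.
    + exists (- INR n - M2 - 1). simpl.
      set (x0 := - INR n - M2 - 1).
      assert (HF : Fexp q t n (p n) (a n) x0 <= eps).
      { rewrite F_Ex. rewrite <- (Ex_const (p n) eps Hp Hs) by lra.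
        apply Ex_le; auto. apply bnd_phi; auto. exists eps; intros; lra.
        intro k. left. apply (HM2 n (a n k) x0 Hn1 (HO k)).
        unfold x0, eta. pose proof (pos_INR (ell (a n k))). lra. }
      rewrite prob_Ex. pose proof (Ex_nonneg (p n) _ Hp Hs (bnd_ind n (a n) (fun e => e <= x0))). lra.
Qed.
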